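(* Let $P(T)=a_0T^N+a_1T^{N-1}+\cdots+a_N\in\mathbb{L}_p[T]$ with $a_0\neq0$ and $a_N\neq 0$, let $s=s^P_{\max}$ be the maximal slope of its Newton polygon, and let $c\in\bar{\mathbb{F}}_p$ be a root of the residue polynomial $\mathrm{Res}_P(T)$ with multiplicity $q$. Put $P_{[c]}(T)=P(T+[c]p^{s})$. Then: (1) $N-q$ is a breakpoint of $\mathrm{NP}(P_{[c]})$; (2) in the range $x\leq N-q$, the Newton polygons $\mathrm{NP}(P)$ and $\mathrm{NP}(P_{[c]})$ coincide; (3) the remaining slopes of $\mathrm{NP}(P_{[c]})$ (on $N-q\le x\le N$) are strictly greater than $s$.
   Context: $\mathbb{L}_p=W(\bar{\mathbb{F}}_p)((p^{\mathbb{Q}}))$ is the $p$-adic Mal'cev–Neumann field of formal sums $\alpha=\sum_{x\in\mathbb{Q}}[\alpha_x]p^x$ ($\alpha_x\in\bar{\mathbb{F}}_p$, $[\cdot]$ Teichmüller lift, well-ordered support), with valuation $v_p(\alpha)=\min$ of support and $C_x(\alpha)=\alpha_x$. The Newton polygon $\mathrm{NP}(P)$ is the lower boundary of the convex hull of the points $(k,v_p(a_k))$ for $a_k\neq 0$; its vertices are breakpoints; $m_{\max}$ is the largest breakpoint $<N$, $s^P_{\max}=\frac{v_p(a_N)-v_p(a_{m_{\max}})}{N-m_{\max}}$, and the residue polynomial is $\mathrm{Res}_P(T)=\sum_{k=0}^{N-m_{\max}}C_{v_p(a_{m_{\max}})+s^P_{\max}(N-m_{\max}-k)}(a_{N-k})\,T^k\in\bar{\mathbb{F}}_p[T]$.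 *)

(* Defs.v *)
From mathcomp Require Import all_boot all_order all_algebra.
Set Implicit Arguments. Unset Strict Implicit. Unset Printing Implicit Defensive.
Import Order.TTheory GRing.Theory Num.Theory.
Local Open Scope ring_scope.

(* The p-adic Mal'cev--Neumann field  L_p = W(Fbar_p)((p^Q)).               *)
(* Its elements are formal sums  alpha = sum_x [alpha_x] p^x  (x in Q,      *)
(* well-ordered support).  The field itself (with Witt-vector carries) is   *)
(* not available in the libraries, so we package, as a record over a field  *)
(* L, the data the statement talks about:                                   *)
(*   C x alpha  = alpha_x  (the Teichmueller digit at x, in the residue     *)
(*                 field k = Fbar_p),                                       *)
(*   vp alpha   = v_p(alpha) = min of the support (for alpha <> 0),         *)
(*   teich c    = [c],  ppow s = p^s,                                       *)
(* together with properties that the digit expansion of L_p satisfies.     *)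
Record MNField (p : nat) (k : fieldType) (L : fieldType) := {
  vp : L -> rat;
  C : rat -> L -> k;
  teich : k -> L;
  ppow : rat -> L;
  C_zero : forall x, C x 0 = 0;
  vpP : forall a, a != 0 ->
          C (vp a) a != 0 /\ (forall y, y < vp a -> C y a = 0);
  C_one : forall x, C x 1 = (x == 0)%:R;
  C_teich : forall c s x, C x (teich c * ppow s) = if x == s then c else 0;
  (* leading digits add (carries only go to higher valuation) *)
  C_add : forall x a b, (forall y, y < x -> C y a = 0) ->
            (forall y, y < x -> C y b = 0) -> C x (a + b) = C x a + C x b;
  C_mul : forall x z a b, (forall y, y < x -> C y a = 0) ->
            (forall y, y < z -> C y b = 0) ->
            C (x + z) (a * b) = C x a * C z b
            /\ (forall y, y < x + z -> C y (a * b) = 0);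
  ppow1 : ppow 1 = p%:R
}.

Section NewtonPolygon.
Variables (p : nat) (k : fieldType) (L : fieldType) (M : MNField p k L).

(* P(T) = a_0 T^N + a_1 T^(N-1) + ... + a_N ; N = deg P *)
Definition degN (P : {poly L}) : nat := (size P).-1.
Definition coefa (P : {poly L}) (i : nat) : L := P`_(degN P - i).

Definition NPhull (P : {poly L}) (x y : rat) : Prop :=
  exists w : 'I_(degN P).+1 -> rat,
    [/\ forall i : 'I_(degN P).+1, 0 <= w i,
        forall i : 'I_(degN P).+1, coefa P i = 0 -> w i = 0,
        \sum_i w i = 1,
        \sum_i w i * (nat_of_ord i)%:R = x
      & \sum_i w i * vp M (coefa P i) = y].

Definition NPgraph (P : {poly L}) (x y : rat) : Prop :=
  NPhull P x y /\ (forall y', NPhull P x y' -> y <= y').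

Definition breakpoint (P : {poly L}) (m : nat) : Prop :=
  (m <= degN P)%N /\
  forall x1 x2 y0 y1 y2, 0 <= x1 -> x1 < m%:R -> m%:R < x2 ->
    x2 <= (degN P)%:R ->
    NPgraph P x1 y1 -> NPgraph P m%:R y0 -> NPgraph P x2 y2 ->
    y0 * (x2 - x1) != y1 * (x2 - m%:R) + y2 * (m%:R - x1).

(* s^P_max, given m = m_max *)
Definition smax (P : {poly L}) (m : nat) : rat :=
  (vp M (coefa P (degN P)) - vp M (coefa P m)) / (degN P - m)%:R.

(* Res_P(T), given m = m_max *)
Definition ResP (P : {poly L}) (m : nat) : {poly k} :=
  \poly_(j < (degN P - m).+1)
     C M (vp M (coefa P m) + smax P m * (degN P - m - j)%:R)
         (coefa P (degN P - j)).

Definition Pshift (P : {poly L}) (c : k) (s : rat) : {poly L} :=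
  P \Po ('X + (teich M c * ppow M s)%:P).

End NewtonPolygon.

(* Main.v *)
Require Import Defs.
From mathcomp Require Import all_boot all_order all_algebra.
From mathcomp Require Import ring lra zify.
Import Order.TTheory GRing.Theory Num.Theory.
Local Open Scope ring_scope.
Set Implicit Arguments. Unset Strict Implicit. Unset Printing Implicit Defensive.

Definition low p (k L : fieldType) (M : MNField p k L) (x : rat) (a : L) :=
  forall y, y < x -> C M y a = 0.

Lemma low_le p k L (M : MNField p k L) x x' a : x' <= x -> low M x a -> low M x' a.
Proof. by move=> h H y hy; apply: H; apply: lt_le_trans hy h. Qed.

Lemma low0 p k L (M : MNField p k L) x : low M x 0.
Proof. by move=> y _; rewrite C_zero. Qed.

Lemma lowD p k L (M : MNField p k L) x a b : low M x a -> low M x b -> low M x (a + b).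
Proof.
move=> ha hb y hy; rewrite (C_add (m:=M) (x:=y)) ?ha ?hb ?addr0 //.
- by move=> z hz; apply: ha; apply: lt_trans hz hy.
- by move=> z hz; apply: hb; apply: lt_trans hz hy.
Qed.

Lemma low_sum p k L (M : MNField p k L) x n (F : 'I_n -> L) :
  (forall i, low M x (F i)) -> low M x (\sum_i F i).
Proof.
move=> h; elim/big_ind: _ => //; [exact: low0 | by move=> a b; apply: lowD].
Qed.

Lemma C_sum p k L (M : MNField p k L) x n (F : 'I_n -> L) :
  (forall i, low M x (F i)) -> C M x (\sum_i F i) = \sum_i C M x (F i).
Proof.
move=> h; elim: n F h => [|n IH] F h; first by rewrite !big_ord0 C_zero.
rewrite !big_ord_recr /= (C_add (m:=M) (x:=x)) ?IH //.
- by move=> y hy; apply: (low_sum (fun i => h (widen_ord (leqnSn n) i))).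
- exact: h.
Qed.

Lemma lowM p k L (M : MNField p k L) x z a b :
  low M x a -> low M z b -> low M (x + z) (a * b).
Proof. by move=> ha hb y hy; have [_ ->] := C_mul ha hb. Qed.

Lemma C_mulE p k L (M : MNField p k L) x z a b :
  low M x a -> low M z b -> C M (x + z) (a * b) = C M x a * C M z b.
Proof. by move=> ha hb; have [-> _] := C_mul ha hb. Qed.

Lemma low_vp p k L (M : MNField p k L) a : a != 0 -> low M (vp M a) a.
Proof. by move=> /(vpP M) []. Qed.

Lemma vp_ge p k L (M : MNField p k L) x a : a != 0 -> low M x a -> x <= vp M a.
Proof.
move=> a0 h; rewrite leNgt; apply/negP => hlt.
by have [+ _] := vpP M a0; rewrite (h _ hlt) eqxx.
Qed.

Lemma vp_eq p k L (M : MNField p k L) x a :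
  low M x a -> C M x a != 0 -> a != 0 /\ vp M a = x.
Proof.
move=> h hc; have a0 : a != 0 by apply: contraNneq hc => ->; rewrite C_zero.
split => //; apply/eqP; rewrite eq_le vp_ge // andbT leNgt; apply/negP => hlt.
by have [_ /(_ _ hlt)] := vpP M a0; apply/eqP.
Qed.

Lemma low_one p k L (M : MNField p k L) : low M 0 1.
Proof. by move=> y hy; rewrite C_one (negbTE (ltr0_neq0 hy)). Qed.

Lemma low_nat p k L (M : MNField p k L) n : low M 0 (n%:R).
Proof.
elim: n => [|n IH]; first exact: low0.
by rewrite -addn1 !natrD; apply: lowD => //; apply: low_one.
Qed.

Lemma C_nat p k L (M : MNField p k L) n : C M 0 (n%:R) = n%:R.
Proof.
elim: n => [|n IH]; first by rewrite C_zero.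
rewrite -addn1 !natrD (C_add (m:=M) (x:=0)) ?IH ?C_one ?eqxx //.
- exact: low_nat.
- by move=> y hy; rewrite C_one (negbTE (ltr0_neq0 hy)).
Qed.

Lemma low_exp p k L (M : MNField p k L) x a n :
  low M x a -> low M (x * n%:R) (a ^+ n) /\ C M (x * n%:R) (a ^+ n) = C M x a ^+ n.
Proof.
move=> h; elim: n => [|n [IH1 IH2]].
  rewrite mulr0 !expr0.
  by split; [exact: low_one | rewrite C_one eqxx].
rewrite exprS mulrSr mulrDr mulr1 addrC; split; first exact: (lowM h IH1).
by rewrite C_mulE // IH2 exprS.
Qed.

Lemma low_neg1 p k L (M : MNField p k L) : low M 0 (-1).
Proof.
have n0 : (-1 : L) != 0 by rewrite oppr_eq0 oner_eq0.
have := low_vp (M:=M) n0; set v := vp M _ => hv.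
have := C_mulE hv hv; rewrite mulrNN mulr1 C_one.
have [cv _] := vpP M n0.
case: eqP => [h|_]; last first.
  by move/esym/eqP; rewrite mulf_eq0 orbb (negbTE cv).
move=> _; apply: (low_le (x:=v)) hv; lra.
Qed.

Lemma lowN p k L (M : MNField p k L) x a : low M x a -> low M x (- a).
Proof.
move=> h; rewrite -mulN1r -[x]add0r; apply: lowM => //; exact: low_neg1.
Qed.

Lemma low_teich p k L (M : MNField p k L) c s : low M s (teich M c * ppow M s).
Proof. by move=> y hy; rewrite C_teich (lt_eqF hy). Qed.

Lemma sum_delta n (i : 'I_n) (F : 'I_n -> rat) :
  \sum_(j < n) (j == i)%:R * F j = F i.
Proof.
rewrite (bigD1 i) //= eqxx mul1r big1 ?addr0 // => j hj.
by rewrite (negbTE hj) mul0r.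
Qed.

Lemma hull_point p k L (M : MNField p k L) Q (i : nat) :
  (i <= degN Q)%N -> coefa Q i != 0 -> NPhull M Q i%:R (vp M (coefa Q i)).
Proof.
move=> hi hc; pose io : 'I_(degN Q).+1 := Ordinal (hi : (i < (degN Q).+1)%N).
exists (fun j : 'I_(degN Q).+1 => (j == io)%:R); split.
- by move=> j; rewrite ler0n.
- by move=> j hj; case: eqP => // ej; move: hc; rewrite -[i]/(nat_of_ord io) -ej hj eqxx.
- by rewrite -[RHS](sum_delta io (fun _ => 1)); apply: eq_bigr => j _; rewrite mulr1.
- exact: (sum_delta io (fun j => (j : nat)%:R)).
- exact: (sum_delta io (fun j => vp M (coefa Q j))).
Qed.

Lemma hull_comb p k L (M : MNField p k L) Q x1 y1 x2 y2 l :
  NPhull M Q x1 y1 -> NPhull M Q x2 y2 -> 0 <= l -> l <= 1 ->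
  NPhull M Q (l * x1 + (1 - l) * x2) (l * y1 + (1 - l) * y2).
Proof.
move=> [w1 [w1p w1z w1s w1x w1y]] [w2 [w2p w2z w2s w2x w2y]] l0 l1.
exists (fun i => l * w1 i + (1 - l) * w2 i); split.
- move=> i; apply: addr_ge0; apply: mulr_ge0 => //; last by rewrite subr_ge0.
- by move=> i hi; rewrite w1z // w2z // !mulr0 addr0.
- by rewrite big_split /= -!mulr_sumr w1s w2s; ring.
- rewrite -w1x -w2x mulr_sumr mulr_sumr -big_split /=.
  by apply: eq_bigr => i _; ring.
- rewrite -w1y -w2y mulr_sumr mulr_sumr -big_split /=.
  by apply: eq_bigr => i _; ring.
Qed.

Lemma hull_above p k L (M : MNField p k L) Q (a s x y : rat) :
  (forall i : nat, (i <= degN Q)%N -> coefa Q i != 0 -> a + s * i%:R <= vp M (coefa Q i)) ->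
  NPhull M Q x y -> a + s * x <= y.
Proof.
move=> hab [w [wp wz ws wx wy]].
rewrite -subr_ge0 -wy -wx.
have -> : a = \sum_i w i * a by rewrite -mulr_suml ws mul1r.
rewrite mulr_sumr -big_split /= -sumrB; apply: sumr_ge0 => i _.
have [/eqP hc|hc] := eqVneq (coefa Q i) 0.
  by rewrite wz ?mul0r ?mulr0 ?add0r ?subrr //; apply/eqP.
have := hab i (ltn_ord i : (i <= degN Q)%N) hc.
rewrite -subr_ge0 => h.
have -> : w i * vp M (coefa Q i) - (w i * a + s * (w i * i%:R)) =
          w i * (vp M (coefa Q i) - (a + s * i%:R)) by ring.
exact: mulr_ge0.
Qed.

Lemma hull_above_strict p k L (M : MNField p k L) Q (a s b g x y : rat) :
  (forall i : nat, (i <= degN Q)%N -> coefa Q i != 0 -> a + s * i%:R <= vp M (coefa Q i)) ->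
  (forall i : nat, (i <= degN Q)%N -> coefa Q i != 0 -> 0 < b + g * i%:R ->
      a + s * i%:R < vp M (coefa Q i)) ->
  0 < b + g * x ->
  NPhull M Q x y -> a + s * x < y.
Proof.
move=> hab hst hx [w [wp wz ws wx wy]].
have [/existsP [i /andP [wi gi]] | hn] := boolP [exists i, (0 < w i) && (0 < b + g * (i : nat)%:R)]; last first.
  exfalso; move: hx; apply/negP; rewrite -leNgt.
  have -> : b + g * x = \sum_i w i * (b + g * (i : nat)%:R).
    rewrite -wx; symmetry; under eq_bigr do rewrite mulrDr mulrCA.
    by rewrite big_split /= -mulr_suml ws mul1r -mulr_sumr.
  apply: sumr_le0 => i _.
  move/existsPn: hn => /(_ i); rewrite negb_and -!leNgt => /orP [h|h].
    have -> : w i = 0 by apply/eqP; rewrite eq_le h wp.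
    by rewrite mul0r.
  by apply: mulr_ge0_le0.
rewrite -subr_gt0 -wy -wx.
have -> : a = \sum_i w i * a by rewrite -mulr_suml ws mul1r.
rewrite mulr_sumr -big_split /= -sumrB.
have tge : forall j : 'I_(degN Q).+1, 0 <= w j * vp M (coefa Q j) - (w j * a + s * (w j * (j : nat)%:R)).
  move=> j.
  have [/eqP hc|hc] := eqVneq (coefa Q j) 0.
    by rewrite wz ?mul0r ?mulr0 ?add0r ?subrr //; apply/eqP.
  have := hab j (ltn_ord j : (j <= degN Q)%N) hc.
  rewrite -subr_ge0 => h.
  have -> : w j * vp M (coefa Q j) - (w j * a + s * (w j * j%:R)) =
            w j * (vp M (coefa Q j) - (a + s * j%:R)) by ring.
  exact: mulr_ge0.
rewrite (bigD1 i) //=; apply: ltr_pwDl; last first.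
  by apply: sumr_ge0 => j _; apply: tge.
have hc : coefa Q i != 0.
  by apply: contraTneq wi => /wz ->; rewrite ltxx.
have := hst i (ltn_ord i : (i <= degN Q)%N) hc gi.
rewrite -subr_gt0 => h.
have -> : w i * vp M (coefa Q i) - (w i * a + s * (w i * i%:R)) =
          w i * (vp M (coefa Q i) - (a + s * i%:R)) by ring.
exact: mulr_gt0.
Qed.

Definition Dom p (k L : fieldType) (M : MNField p k L) (Q1 Q2 : {poly L}) (s : rat) :=
  forall i : nat, (i <= degN Q1)%N -> coefa Q1 i != 0 ->
  exists l : nat, [/\ (l <= i)%N, (l <= degN Q2)%N, coefa Q2 l != 0 &
     vp M (coefa Q2 l) + s * (i%:R - l%:R) <= vp M (coefa Q1 i)].

Lemma sum_delta2 n (j : 'I_n) (F : 'I_n -> rat) :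
  \sum_(i < n) (j == i)%:R * F i = F j.
Proof.
rewrite (bigD1 j) //= eqxx mul1r big1 ?addr0 // => i hi.
by rewrite eq_sym (negbTE hi) mul0r.
Qed.

Lemma shift_hull p k L (M : MNField p k L) Q1 Q2 s x y :
  Dom M Q1 Q2 s -> NPhull M Q1 x y ->
  exists x2 y2, [/\ NPhull M Q2 x2 y2, x2 <= x & y2 + s * (x - x2) <= y].
Proof.
move=> hd [w [wp wz ws wx wy]].
pose N1 := degN Q1; pose N2 := degN Q2.
pose pr (i : 'I_N1.+1) (l : 'I_N2.+1) :=
  [&& (l <= i)%N, coefa Q2 l != 0 &
     vp M (coefa Q2 l) + s * ((i : nat)%:R - (l : nat)%:R) <= vp M (coefa Q1 i)].
pose f (i : 'I_N1.+1) : 'I_N2.+1 := odflt ord0 [pick l | pr i l].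
have fP : forall i : 'I_N1.+1, coefa Q1 i != 0 -> pr i (f i).
  move=> i hc; rewrite /f; case: pickP => [l hl|hn] //=.
  have [l [h1 h2 h3 h4]] := hd i (ltn_ord i : (i <= N1)%N) hc.
  have := hn (Ordinal (h2 : (l < N2.+1)%N)).
  by rewrite /pr /= h1 h3 h4.
have wne : forall i : 'I_N1.+1, w i != 0 -> coefa Q1 i != 0.
  by move=> i; apply: contraNneq => /wz ->.
pose w2 (j : 'I_N2.+1) := \sum_(i < N1.+1) (f i == j)%:R * w i.
have key : forall G : 'I_N2.+1 -> rat,
    \sum_j w2 j * G j = \sum_i w i * G (f i).
  move=> G; rewrite /w2.
  under eq_bigr do rewrite mulr_suml.
  rewrite exchange_big /=; apply: eq_bigr => i _.
  rewrite -(sum_delta2 (f i) G) mulr_sumr; apply: eq_bigr => j _; ring.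
exists (\sum_i w i * (f i : nat)%:R), (\sum_i w i * vp M (coefa Q2 (f i))); split.
- exists w2; split.
  + by move=> j; apply: sumr_ge0 => i _; apply: mulr_ge0 => //; rewrite ler0n.
  + move=> j hj; apply: big1 => i _.
    have [-> | wi] := eqVneq (w i) 0; first by rewrite mulr0.
    have /and3P [_ hc _] := fP i (wne i wi).
    by case: eqP => [ej|]; [move: hc; rewrite ej hj eqxx | rewrite mul0r].
  + have /= K := key (fun _ => 1).
    rewrite (eq_bigr (fun j => w2 j * 1)); last by move=> j _; rewrite mulr1.
    by rewrite K -[RHS]ws; apply: eq_bigr => i _; rewrite mulr1.
  + have /= K := key (fun j => (j : nat)%:R); exact: K.
  + have /= K := key (fun j => vp M (coefa Q2 j)); exact: K.
- rewrite -wx; apply: ler_sum => i _.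
  have [-> | wi] := eqVneq (w i) 0; first by rewrite !mul0r.
  apply: ler_wpM2l => //.
  by have /and3P [h _ _] := fP i (wne i wi); rewrite ler_nat.
- rewrite -wy -wx -sumrB mulr_sumr -big_split /=; apply: ler_sum => i _.
  have [-> | wi] := eqVneq (w i) 0; first by rewrite !(mul0r, mulr0, subrr, addr0).
  have /and3P [_ _ h] := fP i (wne i wi).
  rewrite -mulrBr mulrCA -mulrDr; apply: ler_wpM2l => //.
Qed.

Definition Above p (k L : fieldType) (M : MNField p k L) (Q : {poly L}) (a s : rat) :=
  forall i : nat, (i <= degN Q)%N -> coefa Q i != 0 -> a + s * i%:R <= vp M (coefa Q i).

Definition OnLine p (k L : fieldType) (M : MNField p k L) (Q : {poly L}) (a s : rat) (r : nat) :=
  [/\ (r <= degN Q)%N, coefa Q r != 0 & vp M (coefa Q r) = a + s * r%:R].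

Lemma extend_right p k L (M : MNField p k L) Q a s r x x2 y2 :
  Above M Q a s -> OnLine M Q a s r -> NPhull M Q x2 y2 -> x2 <= x -> x <= r%:R ->
  exists z, NPhull M Q x z /\ z <= y2 + s * (x - x2).
Proof.
move=> hA [hr hc hv] hh h1 h2.
have ha := hull_above hA hh.
have [e|ne] := eqVneq x2 r%:R.
  have ex : x = x2 by apply/eqP; rewrite eq_le h1 andbT e.
  by exists y2; split; [rewrite ex | rewrite ex subrr mulr0 addr0].
have lt : x2 < r%:R by rewrite lt_neqAle ne (le_trans h1 h2).
have pos : 0 < r%:R - x2 by rewrite subr_gt0.
pose l := (r%:R - x) / (r%:R - x2).
have l0 : 0 <= l by apply: divr_ge0; rewrite ?subr_ge0 // ltW.
have l1 : l <= 1 by rewrite ler_pdivrMr // mul1r lerD2l lerN2.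
have hp := hull_point M hr hc.
have := hull_comb hh hp l0 l1.
have ex : l * x2 + (1 - l) * r%:R = x.
  rewrite /l; field; by rewrite gt_eqF.
rewrite ex => hz; eexists; split; first exact: hz.
rewrite hv -subr_ge0.
have -> : y2 + s * (x - x2) - (l * y2 + (1 - l) * (a + s * r%:R)) =
          (1 - l) * (y2 - (a + s * x2)) + s * (x - (l * x2 + (1 - l) * r%:R)) by ring.
rewrite ex subrr mulr0 addr0; apply: mulr_ge0; by rewrite subr_ge0.
Qed.

Lemma np_transfer p k L (M : MNField p k L) Q1 Q2 a s r1 r2 x y :
  Above M Q1 a s -> Above M Q2 a s -> Dom M Q1 Q2 s -> Dom M Q2 Q1 s ->
  OnLine M Q1 a s r1 -> OnLine M Q2 a s r2 -> x <= r1%:R -> x <= r2%:R ->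
  NPgraph M Q1 x y -> NPgraph M Q2 x y.
Proof.
move=> hA1 hA2 hD12 hD21 hO1 hO2 hx1 hx2 [hh hmin].
have lower : forall y', NPhull M Q2 x y' -> y <= y'.
  move=> y' h'.
  have [x3 [y3 [h3 l3 e3]]] := shift_hull hD21 h'.
  have [z [hz ez]] := extend_right hA1 hO1 h3 l3 hx1.
  exact: le_trans (hmin _ hz) (le_trans ez e3).
have [x3 [y3 [h3 l3 e3]]] := shift_hull hD12 hh.
have [z [hz ez]] := extend_right hA2 hO2 h3 l3 hx2.
have ezy : z = y by apply/eqP; rewrite eq_le (le_trans ez e3) lower.
by split; [rewrite -ezy | ].
Qed.

Lemma np_right_slope p k L (M : MNField p k L) Q a s r x1 x2 y1 y2 :
  Above M Q a s -> OnLine M Q a s r ->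
  (forall i : nat, (i <= degN Q)%N -> coefa Q i != 0 -> (r < i)%N ->
      a + s * i%:R < vp M (coefa Q i)) ->
  r%:R <= x1 -> x1 < x2 ->
  NPgraph M Q x1 y1 -> NPgraph M Q x2 y2 -> s < (y2 - y1) / (x2 - x1).
Proof.
move=> hA [hr hc hv] hst h1 h12 [hh1 hm1] [hh2 hm2].
have st : a + s * x2 < y2.
  apply: (hull_above_strict (b := - r%:R) (g := 1) hA _ _ hh2).
  - move=> i hi hci; rewrite mul1r addrC subr_gt0 ltr_nat; exact: hst.
  - by rewrite mul1r addrC subr_gt0; apply: le_lt_trans h12.
have pos : 0 < x2 - r%:R by rewrite subr_gt0; apply: le_lt_trans h12.
pose l := (x2 - x1) / (x2 - r%:R).
have l0 : 0 <= l by apply: divr_ge0; lra.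
have l1 : l <= 1 by rewrite ler_pdivrMr // mul1r; lra.
have lp : 0 < l by apply: divr_gt0; lra.
have hp := hull_point M hr hc.
have := hull_comb hp hh2 l0 l1.
have ex : l * r%:R + (1 - l) * x2 = x1.
  rewrite /l; field; by rewrite gt_eqF.
rewrite ex => /hm1 hz.
have dpos : 0 < x2 - x1 by rewrite subr_gt0.
rewrite ltr_pdivlMr // -subr_gt0.
have e2 : x2 - x1 = l * (x2 - r%:R) by rewrite /l divfK // gt_eqF.
rewrite hv in hz.
have -> : y2 - y1 - s * (x2 - x1) =
   (l * (a + s * r%:R) + (1 - l) * y2 - y1) + l * (y2 - (a + s * x2)).
  rewrite e2; ring.
set A := (l * _ + _ - _); set B := l * _.
have hA' : 0 <= A by rewrite /A subr_ge0.
have hB : 0 < B by rewrite /B; apply: mulr_gt0 => //; rewrite subr_gt0.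
lra.
Qed.

Lemma strict_right_hull p k L (M : MNField p k L) Q a s (r : nat) x y :
  Above M Q a s ->
  (forall i : nat, (i <= degN Q)%N -> coefa Q i != 0 -> (r < i)%N ->
      a + s * i%:R < vp M (coefa Q i)) ->
  r%:R < x -> NPhull M Q x y -> a + s * x < y.
Proof.
move=> hA hst hx hh.
apply: (hull_above_strict (b := - r%:R) (g := 1) hA _ _ hh).
- move=> i hi hci; rewrite mul1r addrC subr_gt0 ltr_nat; exact: hst.
- by rewrite mul1r addrC subr_gt0.
Qed.

Lemma strict_left_hull p k L (M : MNField p k L) Q a s (r : nat) x y :
  Above M Q a s ->
  (forall i : nat, (i <= degN Q)%N -> coefa Q i != 0 -> (i < r)%N ->
      a + s * i%:R < vp M (coefa Q i)) ->
  x < r%:R -> NPhull M Q x y -> a + s * x < y.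
Proof.
move=> hA hst hx hh.
apply: (hull_above_strict (b := r%:R) (g := -1) hA _ _ hh).
- move=> i hi hci; rewrite mulN1r subr_gt0 ltr_nat; exact: hst.
- by rewrite mulN1r subr_gt0.
Qed.

Lemma graph_online p k L (M : MNField p k L) Q a s r y :
  Above M Q a s -> OnLine M Q a s r -> NPgraph M Q r%:R y -> y = a + s * r%:R.
Proof.
move=> hA [hr hc hv] [hh hm].
apply/eqP; rewrite eq_le (hull_above hA hh) andbT -hv.
exact: hm (hull_point M hr hc).
Qed.

Lemma break_core (a s r x1 x2 y0 y1 y2 : rat) :
  x1 < r -> r < x2 -> y0 = a + s * r -> a + s * x1 <= y1 -> a + s * x2 <= y2 ->
  (a + s * x1 < y1 \/ a + s * x2 < y2) ->
  y0 * (x2 - x1) != y1 * (x2 - r) + y2 * (r - x1).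
Proof.
move=> h1 h2 -> e1 e2 hor; apply/negP => /eqP E.
have : (y1 - (a + s * x1)) * (x2 - r) + (y2 - (a + s * x2)) * (r - x1) = 0.
  have -> : (y1 - (a + s * x1)) * (x2 - r) + (y2 - (a + s * x2)) * (r - x1) =
     (y1 * (x2 - r) + y2 * (r - x1)) - (a + s * r) * (x2 - x1) by ring.
  by rewrite E subrr.
have p1 : 0 < x2 - r by rewrite subr_gt0.
have p2 : 0 < r - x1 by rewrite subr_gt0.
case: hor => hs.
- have A : 0 < (y1 - (a + s * x1)) * (x2 - r) by apply: mulr_gt0; rewrite ?subr_gt0.
  have B : 0 <= (y2 - (a + s * x2)) * (r - x1) by apply: mulr_ge0; rewrite subr_ge0 // ltW.
  move: A B; set u := _ * _; set v := _ * _; lra.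
- have A : 0 <= (y1 - (a + s * x1)) * (x2 - r) by apply: mulr_ge0; rewrite subr_ge0 // ltW.
  have B : 0 < (y2 - (a + s * x2)) * (r - x1) by apply: mulr_gt0; rewrite ?subr_gt0.
  move: A B; set u := _ * _; set v := _ * _; lra.
Qed.

Lemma np_break_right p k L (M : MNField p k L) Q a s r :
  Above M Q a s -> OnLine M Q a s r ->
  (forall i : nat, (i <= degN Q)%N -> coefa Q i != 0 -> (r < i)%N ->
      a + s * i%:R < vp M (coefa Q i)) ->
  breakpoint M Q r.
Proof.
move=> hA hO hst; have [hr _ _] := hO; split => // x1 x2 y0 y1 y2 _ h1 h2 _ g1 g0 g2.
apply: break_core => //.
- exact: graph_online hA hO g0.
- exact: hull_above hA g1.1.
- exact: hull_above hA g2.1.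
- by right; apply: strict_right_hull hA hst h2 g2.1.
Qed.

Lemma np_break_left p k L (M : MNField p k L) Q a s r :
  Above M Q a s -> OnLine M Q a s r ->
  (forall i : nat, (i <= degN Q)%N -> coefa Q i != 0 -> (i < r)%N ->
      a + s * i%:R < vp M (coefa Q i)) ->
  breakpoint M Q r.
Proof.
move=> hA hO hst; have [hr _ _] := hO; split => // x1 x2 y0 y1 y2 _ h1 h2 _ g1 g0 g2.
apply: break_core => //.
- exact: graph_online hA hO g0.
- exact: hull_above hA g1.1.
- exact: hull_above hA g2.1.
- by left; apply: strict_left_hull hA hst h1 g1.1.
Qed.

Lemma coef_shift (R : comNzRingType) (Q : {poly R}) (u : R) j :
  (Q \Po ('X + u%:P))`_j = (Q^`N(j)).[u].
Proof.
elim/poly_ind: Q j => [|Q c IH] j.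
  by rewrite comp_poly0 coef0 linear0 horner0.
rewrite comp_poly_MXaddC mulrDr coefD coefD coefMX coefMC coefC IH.
case: j => [|j] /=.
  by rewrite nderivn0 hornerMXaddC IH nderivn0 add0r.
by rewrite nderivnMXaddC hornerD hornerMX IH addr0.
Qed.

Lemma degN_shift (R : fieldType) (Q : {poly R}) (u : R) :
  degN (Q \Po ('X + u%:P)) = degN Q.
Proof. by rewrite /degN size_comp_poly2 // size_XaddC. Qed.

Lemma coef_shift_sum (R : comNzRingType) (Q : {poly R}) (u : R) j :
  (Q \Po ('X + u%:P))`_j = \sum_(r < size Q) Q`_(j + r) *+ 'C(j + r, j) * u ^+ r.
Proof.
rewrite coef_shift (@horner_coef_wide _ (size Q)); last first.
  rewrite /nderivn; apply: leq_trans (size_poly _ _) _; exact: leq_subr.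
by apply: eq_bigr => r _; rewrite coef_nderivn.
Qed.

Lemma dom_shift p k L (M : MNField p k L) (Q : {poly L}) (u : L) s :
  low M s u -> Dom M (Q \Po ('X + u%:P)) Q s.
Proof.
move=> hu i; rewrite degN_shift => hi hc.
set N := degN Q in hi *.
set b := coefa (Q \Po _) i in hc *.
case: (boolP [exists l : 'I_i.+1, (coefa Q l != 0) &&
    (vp M (coefa Q l) + s * (i%:R - (l : nat)%:R) <= vp M b)]).
  move/existsP => [l /andP [h1 h2]]; exists l; split => //.
    by rewrite -ltnS.
  by apply: leq_trans hi; rewrite -ltnS.
move/existsPn => hn; exfalso.
set V := vp M b.
have eb : b = \sum_(r < size Q) Q`_(N - i + r) *+ 'C(N - i + r, N - i) * u ^+ r.
  by rewrite /b /coefa degN_shift coef_shift_sum.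
have hterm : forall r : 'I_(size Q), forall y, y <= V ->
    C M y (Q`_(N - i + r) *+ 'C(N - i + r, N - i) * u ^+ r) = 0.
  move=> r y hy.
  have [hk|hk] := leqP (N - i + r) N; last first.
    rewrite nth_default ?mul0rn ?mul0r ?C_zero //.
    apply: leq_trans hk; rewrite /N /degN; case: (size Q) => //.
  have ri : (r <= i)%N by lia.
  have li : (i - r < i.+1)%N by lia.
  have el : (N - i + r = N - (i - r))%N by lia.
  rewrite el; have [qz|qnz] := eqVneq Q`_(N - (i - r)) 0.
    by rewrite qz mul0rn mul0r C_zero.
  have := hn (Ordinal li); rewrite /coefa /= -/N qnz /= -ltNge => hlt.
  have lowt : low M (vp M Q`_(N - (i - r)) + 0 + s * (r : nat)%:R)
      (Q`_(N - (i - r)) *+ 'C(N - (i - r), N - i) * u ^+ r).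
    rewrite -[_ *+ 'C(_, _)]mulr_natr; apply: lowM; last exact: (proj1 (low_exp r hu)).
    by apply: lowM; [exact: low_vp | exact: low_nat].
  apply: lowt; apply: le_lt_trans hy _; move: hlt.
  by rewrite natrB // (_ : (i%:R - (i%:R - (r : nat)%:R)) = (r : nat)%:R) ?addr0 //; ring.
have : C M V b = 0.
  rewrite eb C_sum; first by apply: big1 => r _; apply: hterm.
  by move=> r y hy; apply: hterm; exact: ltW.
by apply/eqP; have [+ _] := vpP M hc.
Qed.

Lemma graph_of_line p k L (M : MNField p k L) Q a s x :
  Above M Q a s -> NPhull M Q x (a + s * x) -> NPgraph M Q x (a + s * x).
Proof. by move=> hA hh; split => // y' h'; apply: hull_above hA h'. Qed.

Lemma P_structure p k L (M : MNField p k L) P m :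
  coefa P 0 != 0 -> coefa P (degN P) != 0 -> breakpoint M P m -> (m < degN P)%N ->
  (forall m', breakpoint M P m' -> (m' < degN P)%N -> (m' <= m)%N) ->
  [/\ coefa P m != 0,
      Above M P (vp M (coefa P (degN P)) - smax M P m * (degN P)%:R) (smax M P m),
      OnLine M P (vp M (coefa P (degN P)) - smax M P m * (degN P)%:R) (smax M P m) (degN P),
      OnLine M P (vp M (coefa P (degN P)) - smax M P m * (degN P)%:R) (smax M P m) m &
      forall i, (i <= degN P)%N -> coefa P i != 0 -> (i < m)%N ->
        (vp M (coefa P (degN P)) - smax M P m * (degN P)%:R) + smax M P m * i%:R
          < vp M (coefa P i)].
Proof.
move=> h0 hN hbm hmN hmax.
set N := degN P in hN hmN hmax *.
set vN := vp M (coefa P N).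
pose sg (i : nat) := (vN - vp M (coefa P i)) / (N - i)%:R.
have N0 : (0 < N)%N by lia.
pose i0 : 'I_N := Ordinal N0.
have [im Pim Him] := @arg_maxP _ _ 'I_N i0 (fun i : 'I_N => coefa P i != 0)
                      (fun i : 'I_N => sg i) h0.
set S := sg im.
pose aS := vN - S * N%:R.
have dpos : forall i, (i < N)%N -> 0 < N%:R - i%:R :> rat.
  by move=> i hi; rewrite subr_gt0 ltr_nat.
have fac : forall i, (i < N)%N ->
    vp M (coefa P i) - (aS + S * i%:R) = (S - sg i) * (N%:R - i%:R).
  move=> i hi; rewrite /aS /sg mulrBl natrB ?(ltnW hi) // divfK; first by ring.
  by rewrite -natrB ?(ltnW hi) // pnatr_eq0 -lt0n subn_gt0.
have sgle : forall i, (i < N)%N -> coefa P i != 0 -> sg i <= S.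
  by move=> i hi hc; have := Him (Ordinal hi) hc.
have Ab : Above M P aS S.
  move=> i hi hc; have [e|lt] := eqVneq i N.
    by rewrite e /aS subrK.
  have hiN : (i < N)%N by rewrite ltn_neqAle lt hi.
  by rewrite -subr_ge0 fac // pmulr_lge0 ?dpos // subr_ge0 sgle.
have exm : exists n, [&& (n < N)%N, coefa P n != 0 & sg n == S].
  by exists im; rewrite ltn_ord Pim eqxx.
case: (ex_minnP exm) => ms /and3P [msN msnz /eqP mseq] msmin.
have OLN : OnLine M P aS S N.
  by split => //; rewrite /aS -/vN; ring.
have OLms : OnLine M P aS S ms.
  split => //; first exact: ltnW.
  by apply/eqP; rewrite -subr_eq0 fac // mseq subrr mul0r.
have stl : forall i, (i <= N)%N -> coefa P i != 0 -> (i < ms)%N ->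
    aS + S * i%:R < vp M (coefa P i).
  move=> i hi hc him; have hiN : (i < N)%N by apply: ltn_trans msN.
  rewrite -subr_gt0 fac // pmulr_lgt0 ?dpos // subr_gt0 lt_neqAle sgle // andbT.
  apply/negP => /eqP e; have := msmin i; rewrite hiN hc e eqxx /= => /(_ isT).
  by rewrite leqNgt him.
have bms : breakpoint M P ms := np_break_left Ab OLms stl.
have msm : (ms <= m)%N := hmax _ bms msN.
have mms : m = ms.
  apply/eqP; rewrite eqn_leq msm andbT leqNgt; apply/negP => lt.
  have [_ hb] := hbm.
  have g1 : NPgraph M P ms%:R (aS + S * ms%:R).
    apply: graph_of_line => //; have [h1 h2 <-] := OLms; exact: hull_point.
  have g2 : NPgraph M P N%:R (aS + S * N%:R).
    apply: graph_of_line => //; have [h1 h2 <-] := OLN; exact: hull_point.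
  have dd : 0 < N%:R - ms%:R :> rat by apply: dpos.
  pose l := (N%:R - m%:R) / (N%:R - ms%:R) : rat.
  have l0 : 0 <= l by apply: divr_ge0; [rewrite subr_ge0 ler_nat ltnW | apply: ltW].
  have l1 : l <= 1.
    by rewrite ler_pdivrMr // mul1r lerD2l lerN2 ler_nat ltnW.
  have := hull_comb g1.1 g2.1 l0 l1.
  have ex : l * ms%:R + (1 - l) * N%:R = m%:R.
    by rewrite /l; field; rewrite gt_eqF.
  have ey : l * (aS + S * ms%:R) + (1 - l) * (aS + S * N%:R) = aS + S * m%:R.
    by rewrite -ex; ring.
  rewrite ex ey => hm.
  have g0 := graph_of_line Ab hm.
  have := hb ms%:R N%:R _ _ _ (ler0n _ _) _ _ _ g1 g0 g2.
  rewrite !ltr_nat lt hmN lexx => /(_ isT isT isT) /eqP; apply; ring.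
have es : smax M P m = S by rewrite /smax -/N -/vN mms -mseq.
rewrite es -/vN -/aS mms; split => //.
Qed.

Lemma coef_shift_sum_wide (R : comNzRingType) (Q : {poly R}) (u : R) j n :
  (size Q <= n)%N ->
  (Q \Po ('X + u%:P))`_j = \sum_(r < n) Q`_(j + r) *+ 'C(j + r, j) * u ^+ r.
Proof.
move=> hn; rewrite coef_shift (@horner_coef_wide _ n); last first.
  rewrite /nderivn; apply: leq_trans (size_poly _ _) _; apply: leq_trans hn; exact: leq_subr.
by apply: eq_bigr => r _; rewrite coef_nderivn.
Qed.

Lemma taylor_mult (F : fieldType) (R : {poly F}) c : R != 0 ->
  [/\ forall j, (j < mup c R)%N -> (R \Po ('X + c%:P))`_j = 0,
      (R \Po ('X + c%:P))`_(mup c R) != 0 & (mup c R < size R)%N].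
Proof.
move=> Rnz; case: (multiplicity_XsubC R c) => q [g nrg eR].
have hg : ~~ root g c by move: nrg; rewrite Rnz.
have eq : mup c R = q by rewrite eR mupMr // mup_XsubCX eqxx.
have ec : R \Po ('X + c%:P) = (g \Po ('X + c%:P)) * 'X^q.
  rewrite eR comp_polyM rmorphXn /= comp_polyB comp_polyX comp_polyC addrK.
  done.
rewrite eq ec; split.
- by move=> j hj; rewrite coefMXn hj.
- rewrite coefMXn ltnn subnn coef_shift nderivn0; exact: hg.
- have := dvdp_leq Rnz (_ : ('X - c%:P) ^+ q %| R).
  rewrite size_exp_XsubC; apply.
  by rewrite eR dvdp_mull.
Qed.

Lemma size_degN (L : fieldType) (P : {poly L}) : (size P <= (degN P).+1)%N.
Proof. by rewrite /degN; case: (size P). Qed.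

Lemma coefa_N (L : fieldType) (P : {poly L}) j : (j <= degN P)%N ->
  coefa P (degN P - j) = P`_j.
Proof. by move=> hj; rewrite /coefa subKn. Qed.

Lemma low_P p k L (M : MNField p k L) P a s j :
  Above M P a s -> low M (a + s * (degN P - j)%:R) (P`_j).
Proof.
move=> hA; have [hj|hj] := leqP j (degN P); last first.
  by rewrite nth_default; [exact: low0 | exact: leq_trans (size_degN P) hj].
have [->|nz] := eqVneq P`_j 0; first exact: low0.
apply: low_le (low_vp nz); rewrite -coefa_N //; apply: hA; rewrite ?leq_subr ?coefa_N //.
Qed.

Lemma ResCoef p k L (M : MNField p k L) P m a s :
  smax M P m = s -> (m < degN P)%N -> OnLine M P a s m ->
  (forall i, (i <= degN P)%N -> coefa P i != 0 -> (i < m)%N -> a + s * i%:R < vp M (coefa P i)) ->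
  forall j, (ResP M P m)`_j = C M (a + s * (degN P - j)%:R) (P`_j).
Proof.
move=> hs hm [_ _ hv] hst j.
rewrite /ResP coef_poly hs hv.
set N := degN P in hm hst *.
case: ltnP => hj.
  have jN : (j <= N)%N by lia.
  rewrite coefa_N //; congr (C M _ _).
  rewrite !natrB //; try lia; ring.
have [hjN|hjN] := leqP j N; last first.
  by rewrite nth_default ?C_zero //; apply: leq_trans (size_degN P) hjN.
have [->|nz] := eqVneq P`_j 0; first by rewrite C_zero.
have := hst (N - j)%N (leq_subr _ _); rewrite coefa_N // => /(_ nz).
have -> : (N - j < m)%N by lia.
move=> /(_ isT) lt.
by have [_ ->] := vpP M nz.
Qed.

Lemma digit p k L (M : MNField p k L) (P : {poly L}) (a s : rat) (c : k) (R : {poly k}) j :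
  Above M P a s ->
  (forall i, R`_i = C M (a + s * (degN P - i)%:R) (P`_i)) ->
  (size R <= size P)%N -> (j <= degN P)%N ->
  low M (a + s * (degN P - j)%:R) ((P \Po ('X + (teich M c * ppow M s)%:P))`_j) /\
  C M (a + s * (degN P - j)%:R) ((P \Po ('X + (teich M c * ppow M s)%:P))`_j)
    = (R \Po ('X + c%:P))`_j.
Proof.
move=> hA hR hsz hj.
set N := degN P in hR hj *.
set t := teich M c * ppow M s.
rewrite (coef_shift_sum_wide _ _ (leqnn (size P))) (coef_shift_sum_wide _ _ hsz).
have ht : low M s t by move=> y hy; rewrite /t C_teich (lt_eqF hy).
have hterm : forall r : 'I_(size P),
    low M (a + s * (N - j)%:R) (P`_(j + r) *+ 'C(j + r, j) * t ^+ r) /\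
    C M (a + s * (N - j)%:R) (P`_(j + r) *+ 'C(j + r, j) * t ^+ r) =
    R`_(j + r) *+ 'C(j + r, j) * c ^+ r.
  move=> r.
  have [hk|hk] := leqP (j + r) N; last first.
    have z : P`_(j + r) = 0 by rewrite nth_default //; apply: leq_trans (size_degN P) hk.
    by rewrite hR z C_zero !mul0rn !mul0r C_zero; split => //; exact: low0.
  have el : a + s * (N - j)%:R = (a + s * (N - (j + r))%:R) + 0 + s * (r : nat)%:R.
    rewrite !natrB //; try lia; ring.
  rewrite el -[P`_(j + r) *+ _]mulr_natr -[R`_(j + r) *+ _]mulr_natr.
  have h1' : low M (a + s * (N - (j + r))%:R) P`_(j + r) by apply: low_P.
  have h2 := low_nat M 'C(j + r, j).
  have [h3 h3'] := low_exp r ht.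
  split; first by apply: lowM => //; apply: lowM.
  rewrite C_mulE //; last by apply: lowM.
  by rewrite C_mulE // C_nat h3' /t C_teich eqxx hR.
split.
  by apply: low_sum => r; case: (hterm r).
rewrite C_sum; last by move=> r; case: (hterm r).
by apply: eq_bigr => r _; case: (hterm r).
Qed.

Unset Implicit Arguments. Set Strict Implicit. Set Printing Implicit Defensive.

Theorem proposition2p6 (p : nat) (k : closedFieldType) (L : fieldType)
    (M : MNField p k L) (P : {poly L}) (m : nat) (c : k) (q : nat) :
  prime p -> p \in [pchar k] ->
  coefa P 0 != 0 -> coefa P (degN P) != 0 ->
  (* m = m_max : the largest breakpoint of NP(P) smaller than N *)
  breakpoint M P m -> (m < degN P)%N ->
  (forall m', breakpoint M P m' -> (m' < degN P)%N -> (m' <= m)%N) ->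
  (* c is a root of Res_P of multiplicity q *)
  root (ResP M P m) c -> q = mup c (ResP M P m) ->
  let s := smax M P m in
  let Pc := Pshift M P c s in
  [/\ breakpoint M Pc (degN P - q),
      (forall x y, 0 <= x -> x <= (degN P - q)%:R ->
         (NPgraph M P x y <-> NPgraph M Pc x y))
    & (forall x1 x2 y1 y2, (degN P - q)%:R <= x1 -> x1 < x2 ->
         x2 <= (degN P)%:R ->
         NPgraph M Pc x1 y1 -> NPgraph M Pc x2 y2 ->
         s < (y2 - y1) / (x2 - x1))].
Proof.
move=> hp hpc h0 hN hbm hmN hmax hroot hq s Pc.
have [hm_nz hAb hOLN hOLm hstl] := P_structure h0 hN hbm hmN hmax.
rewrite -/s in hAb hOLN hOLm hstl.
set N := degN P in hN hmN hmax hAb hOLN hOLm hstl *.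
set a := vp M (coefa P N) - s * N%:R in hAb hOLN hOLm hstl.
set Res := ResP M P m in hroot hq.
have hRc : forall i, Res`_i = C M (a + s * (N - i)%:R) P`_i.
  exact: (ResCoef (erefl _) hmN hOLm hstl).
have Pnz : P != 0 by apply: contraNneq h0 => ->; rewrite /coefa coef0.
have sizeP : size P = N.+1 by rewrite /N /degN prednK // size_poly_gt0.
have Rnz : Res != 0.
  apply/eqP => /(congr1 (fun r : {poly k} => r`_(N - m))); rewrite coef0 hRc.
  have [_ hc hv] := hOLm.
  rewrite subKn ?(ltnW hmN) // -[P`_(N - m)]/(coefa P m).
  rewrite -hv; have [+ _] := vpP M hc; by move=> /eqP.
have sizeR : (size Res <= size P)%N.
  by rewrite sizeP; apply: leq_trans (size_poly _ _) _; rewrite ltnS leq_subr.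
have [hz hnz hqs] := taylor_mult c Rnz.
rewrite -hq in hz hnz hqs.
have qN : (q <= N)%N.
  rewrite -ltnS -sizeP; exact: leq_trans hqs sizeR.
set t := teich M c * ppow M s.
have ePc : Pc = P \Po ('X + t%:P) by [].
have hdeg : degN Pc = N by rewrite ePc degN_shift.
have ht : low M s t by move=> y hy; rewrite /t C_teich (lt_eqF hy).
have D1 : Dom M Pc P s by rewrite ePc; apply: dom_shift.
have D2 : Dom M P Pc s.
  have := dom_shift (Q := Pc) (lowN ht).
  by rewrite ePc polyCN comp_polyXaddC_K.
have hAc : Above M Pc a s.
  move=> i hi hc; have [l [hl1 hl2 hl3 hl4]] := D1 i hi hc.
  have := hAb l hl2 hl3; move: hl4; set vi := vp M _; set vl := vp M _; nra.
have dig : forall j, (j <= N)%N ->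
    low M (a + s * (N - j)%:R) (Pc`_j) /\
    C M (a + s * (N - j)%:R) (Pc`_j) = (Res \Po ('X + c%:P))`_j.
  by move=> j hj; rewrite ePc; apply: digit.
have coefPc : forall i, (i <= N)%N -> coefa Pc i = Pc`_(N - i).
  by move=> i hi; rewrite /coefa hdeg.
have hOLc : OnLine M Pc a s (N - q).
  have [l1 l2] := dig q qN.
  have hc0 : C M (a + s * (N - q)%:R) Pc`_q != 0 by rewrite l2.
  have [nz ev] := vp_eq l1 hc0.
  split; first by rewrite hdeg leq_subr.
    by rewrite coefPc ?leq_subr // subKn.
  by rewrite coefPc ?leq_subr // subKn.
have hstr : forall i, (i <= degN Pc)%N -> coefa Pc i != 0 -> (N - q < i)%N ->
    a + s * i%:R < vp M (coefa Pc i).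
  move=> i; rewrite hdeg => hi hc hlt.
  rewrite coefPc // in hc *.
  have [l1 l2] := dig (N - i)%N (leq_subr _ _).
  rewrite hz in l2; last by lia.
  rewrite subKn // in l1 l2.
  have := vp_ge hc l1; rewrite le_eqVlt => /orP [/eqP e|//].
  by have [+ _] := vpP M hc; rewrite -e l2 eqxx.
split.
- exact: np_break_right hAc hOLc hstr.
- move=> x y hx0 hx; have hxN : x <= N%:R.
    by apply: le_trans hx _; rewrite ler_nat leq_subr.
  split => h.
  + exact: np_transfer hAb hAc D2 D1 hOLN hOLc hxN hx h.
  + exact: np_transfer hAc hAb D1 D2 hOLc hOLN hx hxN h.
- move=> x1 x2 y1 y2 h1 h12 _ g1 g2.
  exact: np_right_slope hAc hOLc hstr h1 h12 g1 g2.
Qed.
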